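(* Let $\mathfrak{B}\in\mathfrak{L}_{m,p}$ and let $Q_\Phi$ be a QDF. Then $\mathfrak{B}$ is dissipative with respect to $Q_\Phi$ if and only if there exists a symmetric positive semidefinite matrix $\Psi$ such that $Q_{\nabla\Psi}\le Q_\Phi$ on $\mathfrak{B}$.
   Context: Time axis $\mathbb{Z}_+$, $m,p\ge1$, $q=m+p$. $\mathfrak{L}_{m,p}$ is the set of behaviors $\mathfrak{B}=\{w=(u,y):\mathbb{Z}_+\to\mathbb{R}^{q}\mid\exists x:\mathbb{Z}_+\to\mathbb{R}^n,\ x(t+1)=Ax(t)+Bu(t),\ y(t)=Cx(t)+Du(t)\ \forall t\}$ for real matrices $A,B,C,D$. A QDF with coefficient matrix $\Psi\in\mathbb{S}^{(M+1)q}$ ($M\ge-1$, $M=-1$ giving the zero QDF) is $Q_\Psi(w)(t)=w_{[t,t+M]}^\top\Psi w_{[t,t+M]}$ with $w_{[t,t+M]}=\operatorname{col}(w(t),\dots,w(t+M))$. $\nabla\Psi:=\begin{bmatrix}0_{q,q}&0\\0&\Psi\end{bmatrix}-\begin{bmatrix}\Psi&0\\0&0_{q,q}\end{bmatrix}$, so $Q_{\nabla\Psi}(w)(t)=Q_\Psi(w)(t+1)-Q_\Psi(w)(t)$. ''$Q_1\le Q_2$ on $\mathfrak{B}$'' means $Q_1(w)(t)\le Q_2(w)(t)$ for all $w\in\mathfrak{B}$, $t\in\mathbb{Z}_+$. $\mathfrak{B}$ is dissipative with respect to $Q_\Phi$ if there exists a QDF $Q_\Psi$ with $Q_\Psi\ge0$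 on $\mathfrak{B}$ and $Q_{\nabla\Psi}\le Q_\Phi$ on $\mathfrak{B}$. *)

(* Defs.v *)
From HB Require Import structures.
From mathcomp Require Import all_boot all_order all_algebra.
From mathcomp Require Import reals.
Set Implicit Arguments. Unset Strict Implicit. Unset Printing Implicit Defensive.
Import Order.TTheory GRing.Theory Num.Theory.
Local Open Scope ring_scope.

Definition traj (R : realType) (q : nat) := nat -> 'cV[R]_q.

Definition iso_behavior (R : realType) (m p n : nat)
  (A : 'M[R]_n) (B : 'M[R]_(n, m)) (C : 'M[R]_(p, n)) (D : 'M[R]_(p, m))
  (w : traj R (m + p)) : Prop :=
  exists x : nat -> 'cV[R]_n, forall t : nat,
    x t.+1 = A *m x t + B *m usubmx (w t) /\
    dsubmx (w t) = C *m x t + D *m usubmx (w t).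

Definition in_Lmp (R : realType) (m p : nat) (Bh : traj R (m + p) -> Prop) : Prop :=
  exists (n : nat) (A : 'M[R]_n) (B : 'M[R]_(n, m)) (C : 'M[R]_(p, n))
         (D : 'M[R]_(p, m)), forall w, Bh w <-> iso_behavior A B C D w.

(* A QDF with coefficient matrix Psi in S^{(M+1)q} is encoded by N = M+1 >= 0
   (N = 0 is the zero QDF) and a matrix Psi : 'M_(N*q).  *)
Definition sym_mx (R : realType) (k : nat) (Psi : 'M[R]_k) : Prop := Psi^T = Psi.

Definition psd (R : realType) (k : nat) (Psi : 'M[R]_k) : Prop :=
  sym_mx Psi /\ forall v : 'cV[R]_k, 0 <= (v^T *m Psi *m v) 0 0.

(* w_[t, t+N-1] = col(w(t), ..., w(t+N-1)) : 'cV_(N*q); entry k*q+j = w(t+k)_j *)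
Definition window (R : realType) (q N : nat) (w : traj R q) (t : nat) : 'cV[R]_(N * q) :=
  (mxvec (\matrix_(k < N, j < q) w (t + k)%N j 0))^T.

Definition QDF (R : realType) (q N : nat) (Psi : 'M[R]_(N * q)) (w : traj R q) (t : nat) : R :=
  ((window N w t)^T *m Psi *m window N w t) 0 0.

Definition nabla (R : realType) (q N : nat) (Psi : 'M[R]_(N * q)) : 'M[R]_(N.+1 * q) :=
  castmx (esym (mulSn N q), esym (mulSn N q)) (block_mx (0 : 'M_(q, q)) 0 0 Psi)
  - castmx (esym (mulSnr N q), esym (mulSnr N q)) (block_mx Psi 0 0 (0 : 'M_(q, q))).

Definition qdf_le_on (R : realType) (q : nat) (Bh : traj R q -> Prop)
  (Q1 Q2 : traj R q -> nat -> R) : Prop :=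
  forall w, Bh w -> forall t : nat, Q1 w t <= Q2 w t.

Definition dissipative (R : realType) (q : nat) (Bh : traj R q -> Prop)
  (NPhi : nat) (Phi : 'M[R]_(NPhi * q)) : Prop :=
  exists (N : nat) (Psi : 'M[R]_(N * q)),
    sym_mx Psi /\
    qdf_le_on Bh (fun _ _ => 0) (QDF Psi) /\
    qdf_le_on Bh (QDF (nabla Psi)) (QDF Phi).

(* Main.v *)
Require Import Defs.
From HB Require Import structures.
From mathcomp Require Import all_boot all_order all_algebra.
From mathcomp Require Import reals.
From Stdlib Require Import Classical.
Set Implicit Arguments. Unset Strict Implicit. Unset Printing Implicit Defensive.
Import Order.TTheory GRing.Theory Num.Theory.
Local Open Scope ring_scope.

Lemma index_allpairs (T1 T2 : eqType) (s1 : seq T1) (s2 : seq T2) x1 x2 :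
  x1 \in s1 -> x2 \in s2 ->
  index (x1, x2) [seq (a, b) | a <- s1, b <- s2] = (index x1 s1 * size s2 + index x2 s2)%N.
Proof.
move=> + H2; elim: s1 => // a s1 IH; rewrite inE allpairs_cons index_cat /=.
case: (x1 =P a) => [-> _|ne Hin].
  rewrite eqxx mem_map; last by move=> u v [].
  by rewrite H2 index_map //; move=> u v [].
have -> : (x1, x2) \in [seq (a, y) | y <- s2] = false.
  by apply/negbTE/negP => /mapP [y _ [E _]]; apply: ne.
have /negbTE -> : a != x1 by apply/eqP => E; apply: ne; rewrite E.
rewrite /= in Hin.
by rewrite size_map IH // mulSn addnA.
Qed.

Lemma mxvec_index_val m n (i : 'I_m) (j : 'I_n) :
  (mxvec_index i j : nat) = (i * n + j)%N.
Proof.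
rewrite /mxvec_index /= /enum_rank enum_rank_in.unlock insubdK /=.
  rewrite (@enumT (prod 'I_m 'I_n)). rewrite unlock /=. rewrite /prod_enum index_allpairs ?mem_enum //.
  by rewrite !index_enum_ord size_enum_ord.
by rewrite unfold_in /= cardE index_mem mem_enum.
Qed.

Lemma windowE (R : realType) q N (w : traj R q) t (i : 'I_(N*q)) (j : 'I_q) :
  (j : nat) = (i %% q)%N -> window N w t i 0 = w (t + i %/ q)%N j 0.
Proof.
rewrite /window mxE; move: i; case/mxvec_indexP => a b.
rewrite mxvecE mxE mxvec_index_val => Hj.
have q0 : (0 < q)%N by apply: leq_ltn_trans (ltn_ord b).
rewrite modnMDl modn_small // in Hj.
rewrite divnMDl // (divn_small (ltn_ord b)) addn0.
by congr (w _ _ _); apply: val_inj.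
Qed.

Lemma window_splitl (R : realType) q N (w : traj R q) t : (0 < q)%N ->
  window N.+1 w t = castmx (esym (mulSn N q), erefl) (col_mx (w t) (window N w t.+1)).
Proof.
move=> q0; apply/matrixP => i k; rewrite ord1 castmxE [RHS]mxE/= !cast_ord_id.
case: splitP => [i1 /= Hi | i2 /= Hi].
  rewrite (@windowE _ _ _ _ _ _ i1); last by rewrite Hi modn_small.
  by rewrite Hi divn_small // addn0; congr (w _ _ _); apply: val_inj.
have Hm : (i2 %% q < q)%N by rewrite ltn_pmod.
rewrite (@windowE _ _ _ _ _ _ (Ordinal Hm)) /=; last by rewrite Hi modnDl.
rewrite (@windowE _ _ _ _ _ _ (Ordinal Hm)) //=.
rewrite Hi; have -> : (q + i2 = 1 * q + i2)%N by rewrite mul1n.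
rewrite divnMDl // addnA addn1.
by congr (w _ _ _); apply: val_inj.
Qed.

Lemma window_splitr (R : realType) q N (w : traj R q) t : (0 < q)%N ->
  window N.+1 w t = castmx (esym (mulSnr N q), erefl) (col_mx (window N w t) (w (t + N)%N)).
Proof.
move=> q0; apply/matrixP => i k; rewrite ord1 castmxE [RHS]mxE/= !cast_ord_id.
case: splitP => [i1 /= Hi | i2 /= Hi].
  have Hm : (i1 %% q < q)%N by rewrite ltn_pmod.
  rewrite (@windowE _ _ _ _ _ _ (Ordinal Hm)) /=; last by rewrite Hi.
  by rewrite (@windowE _ _ _ _ _ _ (Ordinal Hm)) //= Hi.
rewrite (@windowE _ _ _ _ _ _ i2); last by rewrite Hi modnMDl modn_small.
rewrite Hi divnMDl // divn_small // addn0.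
by congr (w _ _ _); apply: val_inj.
Qed.

Lemma qf_cast (R : realType) n n' (e : n = n') (X : 'M[R]_n) (v : 'cV_n) :
  (castmx (e, erefl 1%N) v)^T *m castmx (e, e) X *m castmx (e, erefl 1%N) v
  = v^T *m X *m v.
Proof. by case: n' / e; rewrite !castmx_id. Qed.

Lemma qf_block_r (R : realType) n1 n2 (X : 'M[R]_n2) (a : 'cV_n1) b :
  (col_mx a b)^T *m block_mx 0 0 0 X *m col_mx a b = b^T *m X *m b.
Proof.
by rewrite tr_col_mx mul_row_block !mulmx0 !add0r mul_row_col mul0mx add0r.
Qed.

Lemma qf_block_l (R : realType) n1 n2 (X : 'M[R]_n1) (a : 'cV_n1) (b : 'cV_n2) :
  (col_mx a b)^T *m block_mx X 0 0 0 *m col_mx a b = a^T *m X *m a.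
Proof.
by rewrite tr_col_mx mul_row_block !mulmx0 !addr0 mul_row_col mul0mx addr0.
Qed.

Lemma subE (R : realType) m n (A B : 'M[R]_(m, n)) i j : (A - B) i j = A i j - B i j.
Proof. by rewrite !mxE. Qed.

Lemma QDF_nabla (R : realType) q N (X : 'M[R]_(N * q)) (w : traj R q) t : (0 < q)%N ->
  QDF (nabla X) w t = QDF X w t.+1 - QDF X w t.
Proof.
move=> q0; rewrite /QDF /nabla mulmxBr mulmxBl subE.
congr (_ - _).
  by rewrite window_splitl // qf_cast qf_block_r.
by rewrite window_splitr // qf_cast qf_block_l.
Qed.

Section Iso.
Variables (R : realType) (m p n : nat).
Variables (A : 'M[R]_n) (B : 'M[R]_(n, m)) (C : 'M[R]_(p, n)) (D : 'M[R]_(p, m)).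

Lemma usubmxL (c : R) (a b : 'M[R]_(m + p, 1)) : usubmx (c *: a + b) = c *: usubmx a + usubmx b.
Proof. by apply/matrixP => i j; rewrite !mxE. Qed.
Lemma dsubmxL (c : R) (a b : 'M[R]_(m + p, 1)) : dsubmx (c *: a + b) = c *: dsubmx a + dsubmx b.
Proof. by apply/matrixP => i j; rewrite !mxE. Qed.

Lemma iso_lin (c : R) (w1 w2 : traj R (m + p)) :
  iso_behavior A B C D w1 -> iso_behavior A B C D w2 ->
  iso_behavior A B C D (fun t => c *: w1 t + w2 t).
Proof.
move=> [x1 H1] [x2 H2]; exists (fun t => c *: x1 t + x2 t) => t.
have [E1 F1] := H1 t; have [E2 F2] := H2 t.
rewrite usubmxL dsubmxL E1 E2 F1 F2 !mulmxDr -!scalemxAr !scalerDr.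
by split; rewrite -!addrA; congr (_ + _); rewrite addrC -!addrA; congr (_ + _); rewrite addrC.
Qed.

Lemma iso_zero : iso_behavior A B C D (fun _ => 0).
Proof.
exists (fun _ => 0) => t.
have -> : usubmx (0 : 'M[R]_(m + p, 1)) = 0 by apply/matrixP => i j; rewrite !mxE.
have -> : dsubmx (0 : 'M[R]_(m + p, 1)) = 0 by apply/matrixP => i j; rewrite !mxE.
by split; rewrite !mulmx0 ?addr0.
Qed.

Lemma iso_shift (k : nat) (w : traj R (m + p)) :
  iso_behavior A B C D w -> iso_behavior A B C D (fun t => w (k + t)%N).
Proof. by move=> [x H]; exists (fun t => x (k + t)%N) => t; rewrite addnS; apply: H. Qed.
End Iso.

Lemma window_lin (R : realType) q N (c : R) (w1 w2 : traj R q) t :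
  window N (fun s => c *: w1 s + w2 s) t = c *: window N w1 t + window N w2 t.
Proof.
rewrite /window.
have -> : \matrix_(k < N, j < q) (c *: w1 (t + k)%N + w2 (t + k)%N) j 0
  = c *: \matrix_(k < N, j < q) w1 (t + k)%N j 0 + \matrix_(k < N, j < q) w2 (t + k)%N j 0.
  by apply/matrixP => i j; rewrite !mxE.
by rewrite linearP /= linearP.
Qed.

Lemma window0 (R : realType) q N t : window N (fun _ => 0 : 'cV[R]_q) t = 0.
Proof.
rewrite /window.
have -> : \matrix_(k < N, j < q) (0 : 'cV[R]_q) j 0 = 0 by apply/matrixP => i j; rewrite !mxE.
by rewrite linear0 linear0.
Qed.

Lemma window_shift (R : realType) q N (w : traj R q) t :
  window N (fun s => w (t + s)%N) 0 = window N w t.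
Proof. by rewrite /window; congr (mxvec _)^T; apply/matrixP => i j; rewrite !mxE add0n. Qed.


Lemma span_exists (R : realType) k (W : 'rV[R]_k -> Prop) :
  W 0 -> (forall c v1 v2, W v1 -> W v2 -> W (c *: v1 + v2)) ->
  exists r (S : 'M[R]_(r, k)), (forall u, W (u *m S)) /\ (forall v, W v -> (v <= S)%MS).
Proof.
move=> W0 Wlin; apply: NNPP => H.
have step : forall r, exists S : 'M[R]_(r, k), \rank S = r /\ forall u, W (u *m S).
  elim => [|r [S [rk HS]]].
    by exists 0; rewrite mxrank0; split => // u; rewrite mulmx0.
  have [v Hv] : exists v, ~ (W v -> (v <= S)%MS).
    by apply: not_all_ex_not => Hall; apply: H; exists r, S.
  have [Wv nvS] := imply_to_and _ _ Hv.
  exists (col_mx v S); split.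
    have lt : (S < col_mx v S)%MS.
      rewrite ltmxE col_mx_sub.
      have -> : (S <= col_mx v S)%MS.
        by apply/submxP; exists (row_mx 0 1%:M); rewrite mul_row_col mul0mx mul1mx add0r.
      by apply/negP => /andP [/idP ? _].
    move: lt; rewrite ltmxErank => /andP [_ lt].
    apply/eqP; rewrite eqn_leq rank_leq_row /=.
    by move: lt; rewrite rk.
  move=> u; have E := mul_row_col (lsubmx (u : 'rV_(1 + r))) (rsubmx (u : 'rV_(1 + r))) v S.
  rewrite hsubmxK in E; rewrite E (mx11_scalar (lsubmx _)) mul_scalar_mx.
  by apply: Wlin.
have [S [rk _]] := step k.+1.
by move: (rank_leq_col S); rewrite rk ltnn.
Qed.

Theorem lemma1 (R : realType) (m p : nat) (hm : (1 <= m)%N) (hp : (1 <= p)%N)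
  (Bh : traj R (m + p) -> Prop) (hB : in_Lmp Bh)
  (NPhi : nat) (Phi : 'M[R]_(NPhi * (m + p))) (hPhi : sym_mx Phi) :
  dissipative Bh Phi <->
  exists (N : nat) (Psi : 'M[R]_(N * (m + p))),
    psd Psi /\ qdf_le_on Bh (QDF (nabla Psi)) (QDF Phi).
Proof.
have q0 : (0 < m + p)%N by rewrite addn_gt0 hm.
split; last first.
  case=> N [Psi [[hsym hpsd] hnab]]; exists N, Psi; split => //; split => // w _ t.
  exact: hpsd.
case=> N [Psi [hsym [hpos hnab]]].
have [n [A [B [C [D hBeq]]]]] := hB.
pose W (v : 'rV[R]_(N * (m + p))) := exists w, Bh w /\ v = (window N w 0)^T.
have W0 : W 0.
  exists (fun _ => 0); split; first by apply/hBeq; apply: iso_zero.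
  by rewrite window0 trmx0.
have Wlin : forall c v1 v2, W v1 -> W v2 -> W (c *: v1 + v2).
  move=> c v1 v2 [w1 [B1 ->]] [w2 [B2 ->]].
  exists (fun s => c *: w1 s + w2 s); split.
    by apply/hBeq; apply: iso_lin; apply/hBeq.
  by rewrite window_lin linearP.
have Wsh : forall w t, Bh w -> W (window N w t)^T.
  move=> w t Bw; exists (fun s => w (t + s)%N); split; last by rewrite window_shift.
  by apply/hBeq; apply: iso_shift; apply/hBeq.
have [r [S [HS1 HS2]]] := span_exists W0 Wlin.
pose Pr := pinvmx S *m S.
have key : forall z, W z^T -> Pr^T *m z = z.
  move=> z Wz; apply: trmx_inj; rewrite trmx_mul trmxK mulmxA mulmxKpV //.
  exact: HS2.
have inW : forall z, W (Pr^T *m z)^T.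
  by move=> z; rewrite trmx_mul trmxK mulmxA; apply: HS1.
pose Psi' := Pr *m Psi *m Pr^T.
have qfP : forall z : 'cV_(N * (m + p)), z^T *m Psi' *m z = (Pr^T *m z)^T *m Psi *m (Pr^T *m z).
  by move=> z; rewrite /Psi' [(Pr^T *m z)^T]trmx_mul trmxK !mulmxA.
have Qeq : forall w t, Bh w -> QDF Psi' w t = QDF Psi w t.
  by move=> w t Bw; rewrite /QDF qfP key //; apply: Wsh.
exists N, Psi'; split.
  split.
    by rewrite /sym_mx /Psi' [LHS]trmx_mul [(Pr *m Psi)^T]trmx_mul trmxK hsym mulmxA.
  move=> v; rewrite qfP.
  have [w [Bw E]] := inW v.
  have -> : Pr^T *m v = window N w 0 by apply: trmx_inj.
  exact: hpos.
move=> w Bw t; rewrite !QDF_nabla // !Qeq //.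
by rewrite -QDF_nabla //; apply: hnab.
Qed.
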